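(* For every integer $r\ge-1$, the generating function $\sum_\pi q^{|\pi|}$ over all partitions $\pi$ with $n$ copies of $n$ (including the empty one) in which, with parts in ascending lexicographic order, the weighted difference between each part and the preceding part is at least $r$, equals $$\sum_{m\ge0}\frac{q^{m^2+r\binom m2}}{(q;q)_m\,(q;q^2)_m}.$$
   Context: $M=\{m_i: 1\le i\le m\}$; a partition with $n$ copies of $n$ is a finite multiset of elements of $M$, $|\pi|$ the sum of values (first entries). Lexicographic order: $m_i>n_j$ iff $m>n$, or $m=n$ and $i>j$. Weighted difference $((m_i-n_j))=m-n-i-j$. $(a;q)_m=\prod_{j=0}^{m-1}(1-aq^j)$. *)

(* Defs.v *)
From mathcomp Require Import all_boot all_order all_algebra.
Set Implicit Arguments. Unset Strict Implicit. Unset Printing Implicit Defensive.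
Import Order.TTheory GRing.Theory Num.Theory.
Local Open Scope ring_scope.

(** Formal power series in q with integer coefficients: n |-> coefficient of q^n. *)
Definition fps := nat -> int.

Definition fps_one : fps := fun n => (n == 0%N)%:R.
Definition fps_X (k : nat) : fps := fun n => (n == k)%:R.
Definition fps_sub (f g : fps) : fps := fun n => f n - g n.
Definition fps_mul (f g : fps) : fps :=
  fun n => \sum_(k < n.+1) f k * g (n - k)%N.
Definition fps_prod (s : seq fps) : fps := foldr fps_mul fps_one s.

(** Reciprocal of a series with constant term 1:
    g_0 = 1, g_(n+1) = - sum_(k=1)^(n+1) f_k g_(n+1-k).
    [fps_inv_list f n] is the list [g_0; ...; g_n]. *)
Fixpoint fps_inv_list (f : fps) (n : nat) : seq int :=
  match n with
  | 0%N => [:: 1]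
  | n'.+1 => let s := fps_inv_list f n' in
             rcons s (- \sum_(k < n'.+1) f k.+1 * nth 0 s (n' - k)%N)
  end.
Definition fps_inv (f : fps) : fps := fun n => nth 0 (fps_inv_list f n) n.

(** (q^a ; q^d)_m = prod_(j < m) (1 - q^(a + d j)) *)
Definition qpoch (a d m : nat) : fps :=
  fps_prod [seq fps_sub fps_one (fps_X (a + d * j)) | j <- iota 0 m].

(** exponent m^2 + r * binom(m,2) (nonnegative for r >= -1) *)
Definition expo (r : int) (m : nat) : int := (m ^ 2)%:Z + r * ('C(m, 2))%:Z.

Definition rhs_term (r : int) (m : nat) : fps :=
  fps_mul (fps_X `|expo r m|%N) (fps_inv (fps_mul (qpoch 1 1 m) (qpoch 1 2 m))).

(** Partitions with n copies of n: a part n_i is the pair (n, i), 1 <= i <= n.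
    A partition (finite multiset of parts) is represented by the list of its
    parts in ascending lexicographic order. *)
Definition part_ok (p : nat * nat) : bool := (0 < p.2)%N && (p.2 <= p.1)%N.

Definition lexle (p q : nat * nat) : bool :=
  (p.1 < q.1)%N || ((p.1 == q.1) && (p.2 <= q.2)%N).

Definition wdiff (a b : nat * nat) : int :=
  a.1%:Z - b.1%:Z - a.2%:Z - b.2%:Z.

Definition pweight (s : seq (nat * nat)) : nat := sumn (map fst s).

Definition valid_part (r : int) (s : seq (nat * nat)) : bool :=
  all part_ok s && sorted lexle s && sorted (fun a b => r <= wdiff b a) s.

(* Main.v *)
Require Import Defs.
From mathcomp Require Import all_boot all_order all_algebra.
From mathcomp Require Import zify ring lra.
From Stdlib Require Import FunctionalExtensionality.
Import Order.TTheory GRing.Theory Num.Theory.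
Local Open Scope ring_scope.

Lemma fps_mulE f g n : fps_mul f g n = \sum_(k < n.+1) f k * g (n - k)%N.
Proof. by []. Qed.

Definition tp (f : fps) (n : nat) : {poly int} := \poly_(i < n.+1) f i.

Lemma tpE f n j : (j <= n)%N -> (tp f n)`_j = f j.
Proof. by move=> jn; rewrite coef_poly ltnS jn. Qed.

Lemma mul_agree f g n j : (j <= n)%N -> fps_mul f g j = (tp f n * tp g n)`_j.
Proof.
move=> jn; rewrite coefM fps_mulE; apply: eq_bigr => k _.
have kj := ltn_ord k.
by rewrite !tpE //; lia.
Qed.

Lemma fps_mulC f g : fps_mul f g = fps_mul g f.
Proof.
by apply: functional_extensionality => n; rewrite (@mul_agree f g n n (leqnn n)) (@mul_agree g f n n (leqnn n)) mulrC.
Qed.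

Lemma fps_mulA f g h : fps_mul (fps_mul f g) h = fps_mul f (fps_mul g h).
Proof.
apply: functional_extensionality => n.
have -> : fps_mul (fps_mul f g) h n = ((tp f n * tp g n) * tp h n)`_n.
  rewrite coefM fps_mulE; apply: eq_bigr => k _.
  have kj := ltn_ord k.
  rewrite (@mul_agree _ _ n); last by lia.
  by rewrite tpE //; lia.
have -> : fps_mul f (fps_mul g h) n = (tp f n * (tp g n * tp h n))`_n.
  rewrite coefM fps_mulE; apply: eq_bigr => k _.
  have kj := ltn_ord k.
  rewrite (@mul_agree _ _ n); last by lia.
  by rewrite tpE //; lia.
by rewrite mulrA.
Qed.

Lemma fps_mulCA f g h : fps_mul f (fps_mul g h) = fps_mul g (fps_mul f h).
Proof. by rewrite -fps_mulA (fps_mulC f g) fps_mulA. Qed.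

Lemma fps_X_mul a h n :
  fps_mul (fps_X a) h n = if (a <= n)%N then h (n - a)%N else 0.
Proof.
rewrite fps_mulE.
have -> : \sum_(k < n.+1) fps_X a k * h (n - k)%N =
          \sum_(k < n.+1 | k == a :> nat) h (n - k)%N.
  rewrite [RHS]big_mkcond; apply: eq_bigr => k _; rewrite /fps_X.
  by case: eqP => _; rewrite ?mul1r ?mul0r.
rewrite (big_ord1_eq _ (fun k => h (n - k)%N)). by rewrite ltnS.
Qed.

Lemma fps_one_X : fps_one = fps_X 0.
Proof. by []. Qed.

Lemma fps_mul1 h : fps_mul fps_one h = h.
Proof.
by apply: functional_extensionality => n; rewrite fps_one_X fps_X_mul subn0.
Qed.

Lemma fps_mulr1 h : fps_mul h fps_one = h.
Proof. by rewrite fps_mulC fps_mul1. Qed.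

Lemma fps_mul_subl f g h n :
  fps_mul (fps_sub f g) h n = fps_mul f h n - fps_mul g h n.
Proof.
rewrite !fps_mulE -sumrB; apply: eq_bigr => k _; by rewrite /fps_sub mulrBl.
Qed.

Lemma fps_XX a b : fps_mul (fps_X a) (fps_X b) = fps_X (a + b).
Proof.
apply: functional_extensionality => n; rewrite fps_X_mul /fps_X.
case: leqP => an.
  by congr (_ %:R); apply/eqP/eqP; lia.
by have -> : (n == a + b)%N = false by apply/eqP; lia.
Qed.

Lemma fps_cancel f g h : f 0%N = 1 -> fps_mul f g = fps_mul f h -> g = h.
Proof.
move=> f0 E; apply: functional_extensionality => n.
elim/ltn_ind: n => n IH.
have := congr1 (fun F => F n) E; rewrite !fps_mulE !big_ord_recl f0 !mul1r subn0.
have -> : \sum_(i < n) f (lift ord0 i) * g (n - lift ord0 i)%N =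
          \sum_(i < n) f (lift ord0 i) * h (n - lift ord0 i)%N.
  apply: eq_bigr => i _; rewrite IH //; have:= ltn_ord i; rewrite /= /bump /=; lia.
by move/addIr.
Qed.

Lemma size_inv_list f n : size (fps_inv_list f n) = n.+1.
Proof. by elim: n => //= n IH; rewrite size_rcons IH. Qed.

Lemma nth_inv_list f n k : (k <= n)%N -> nth 0 (fps_inv_list f n) k = fps_inv f k.
Proof.
elim: n k => [|n IH] k kn.
  by have -> : k = 0%N by lia.
rewrite /= nth_rcons size_inv_list.
case: ltnP => kn'; first by apply: IH; lia.
have -> : k = n.+1 by lia.
by rewrite eqxx /fps_inv /= nth_rcons size_inv_list ltnn eqxx.
Qed.

Lemma inv_rec f n :
  fps_inv f n.+1 = - \sum_(k < n.+1) f k.+1 * fps_inv f (n - k)%N.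
Proof.
rewrite {1}/fps_inv /= nth_rcons size_inv_list ltnn eqxx; congr (- _).
by apply: eq_bigr => k _; rewrite nth_inv_list // leq_subr.
Qed.

Lemma inv_mul f : f 0%N = 1 -> fps_mul f (fps_inv f) = fps_one.
Proof.
move=> f0; apply: functional_extensionality => n; case: n => [|n].
  by rewrite fps_mulE big_ord1 f0 mul1r.
rewrite fps_mulE big_ord_recl f0 mul1r subn0 inv_rec.
have -> : \sum_(i < n.+1) f (lift ord0 i) * fps_inv f (n.+1 - lift ord0 i)%N =
          \sum_(k < n.+1) f k.+1 * fps_inv f (n - k)%N.
  by apply: eq_bigr => i _; rewrite /= /bump /= add1n subSS.
by rewrite addNr.
Qed.

Definition geo (a : nat) (f : fps) : fps :=
  fun N => \sum_(0 <= c < N.+1 | (a * c <= N)%N) f (N - a * c)%N.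

Lemma geo_rec a f N : (0 < a)%N ->
  geo a f N = f N + (if (a <= N)%N then geo a f (N - a)%N else 0).
Proof.
move=> a0; rewrite /geo big_mkcond big_nat_recl // muln0 subn0 leq0n.
congr (_ + _).
case: leqP => aN.
  rewrite [RHS]big_mkcond.
  rewrite (@big_cat_nat _ _ _ (N - a).+1 0 N) //=; last by lia.
  rewrite [X in _ + X]big_nat_cond [X in _ + X]big1 ?addr0; last first.
    move=> i /andP[/andP[Hi _] _]; rewrite ifF //.
    have := leq_pmull i a0; rewrite mulnS; lia.
  apply: eq_bigr => i _.
  have -> : (a * i.+1 <= N)%N = (a * i <= N - a)%N by rewrite mulnS; lia.
  by rewrite mulnS subnDA.
rewrite big1 // => i _; rewrite ifF //; rewrite mulnS; lia.
Qed.

Lemma geo_inv a f : (0 < a)%N -> fps_mul (fps_sub fps_one (fps_X a)) (geo a f) = f.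
Proof.
move=> a0; apply: functional_extensionality => N.
rewrite fps_mul_subl fps_mul1 fps_X_mul geo_rec //.
by case: ifP => _; rewrite ?subr0 ?addrK.
Qed.

Lemma fps_prod_cat s t : fps_prod (s ++ t) = fps_mul (fps_prod s) (fps_prod t).
Proof.
elim: s => [|x s IH] /=; first by rewrite fps_mul1.
by rewrite IH fps_mulA.
Qed.

Lemma qpochS a d m :
  qpoch a d m.+1 = fps_mul (qpoch a d m) (fps_sub fps_one (fps_X (a + d * m))).
Proof.
rewrite /qpoch -addn1 iotaD map_cat fps_prod_cat /= add0n.
by rewrite fps_mulr1.
Qed.

Lemma fps_mul0 f g : fps_mul f g 0%N = f 0%N * g 0%N.
Proof. by rewrite fps_mulE big_ord1. Qed.

Lemma qpoch0 a d m : (0 < a)%N -> qpoch a d m 0%N = 1.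
Proof.
move=> a0; rewrite /qpoch; elim: (iota 0 m) => [|j s IH] //=.
rewrite fps_mul0 IH mulr1 /fps_sub /fps_one /fps_X.
by have -> : (0 == a + d * j)%N = false by apply/eqP; lia.
Qed.

Definition shiftp (t : nat) (p : nat * nat) : nat * nat := (p.1 + t, p.2)%N.
Definition unshiftp (t : nat) (p : nat * nat) : nat * nat := (p.1 - t, p.2)%N.
Definition tval (r : int) (a i : nat) : nat := absz (a%:Z + i%:Z + r).
Definition build (r : int) (e c : nat) (s : seq (nat * nat)) : seq (nat * nat) :=
  (c.+1 + e, c.+1)%N :: map (shiftp (tval r (c.+1 + e) c.+1)) s.
Definition Kv (r : int) (m : nat) : nat := absz ((2 * m + 1)%N%:Z + r * m%:Z).

Fixpoint V (r : int) (m N : nat) : seq (seq (nat * nat)) :=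
  match m with
  | 0%N => if N == 0%N then [:: [::]] else [::]
  | m'.+1 => flatten [seq flatten [seq
        (if (Kv r m' <= N - m'.+1 * e - (2 * m' + 1) * c)%N
         then [seq build r e c s | s <- V r m' (N - m'.+1 * e - (2 * m' + 1) * c - Kv r m')]
         else [::])
        | c <- iota 0 (N - m'.+1 * e).+1 & ((2 * m' + 1) * c <= N - m'.+1 * e)%N]
       | e <- iota 0 N.+1 & (m'.+1 * e <= N)%N]
  end.

Lemma VS r m N : V r m.+1 N = flatten [seq flatten [seq
        (if (Kv r m <= N - m.+1 * e - (2 * m + 1) * c)%N
         then [seq build r e c s | s <- V r m (N - m.+1 * e - (2 * m + 1) * c - Kv r m)]
         else [::])
        | c <- iota 0 (N - m.+1 * e).+1 & ((2 * m + 1) * c <= N - m.+1 * e)%N]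
       | e <- iota 0 N.+1 & (m.+1 * e <= N)%N].
Proof. by []. Qed.

Definition gV (r : int) (m : nat) : fps := fun N => (size (V r m N))%:Z.

Lemma size_flat (T : Type) (F : nat -> seq T) (xs : seq nat) (P : pred nat) :
  (size (flatten [seq F x | x <- xs & P x]))%:Z = \sum_(x <- xs | P x) (size (F x))%:Z.
Proof.
elim: xs => [|x xs IH]; first by rewrite big_nil.
rewrite big_cons /=; case: (P x) => //=.
by rewrite size_cat PoszD IH.
Qed.

Lemma gV_S r m : gV r m.+1 = geo m.+1 (geo (2 * m + 1) (fps_mul (fps_X (Kv r m)) (gV r m))).
Proof.
apply: functional_extensionality => N.
rewrite /gV VS size_flat /geo; apply: eq_bigr => e _.
rewrite size_flat; apply: eq_bigr => c _.
rewrite fps_X_mul; case: ifP => _ //.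
by rewrite size_map.
Qed.

Lemma gV_0 r : gV r 0 = fps_one.
Proof.
apply: functional_extensionality => N; rewrite /gV /fps_one /=.
by case: (N == 0%N).
Qed.

Fixpoint ev (r : int) (m : nat) : nat :=
  match m with 0%N => 0%N | m'.+1 => (ev r m' + Kv r m')%N end.

Definition Pm (m : nat) : fps := fps_mul (qpoch 1 1 m) (qpoch 1 2 m).

Lemma Pm0 m : Pm m 0%N = 1.
Proof. by rewrite /Pm fps_mul0 !qpoch0 // mulr1. Qed.

Lemma rearr a b c d x : fps_mul (fps_mul (fps_mul a b) (fps_mul c d)) x =
  fps_mul (fps_mul a c) (fps_mul d (fps_mul b x)).
Proof. by rewrite !fps_mulA (fps_mulCA b c) (fps_mulCA b d). Qed.

Lemma key_gf r m : fps_mul (Pm m) (gV r m) = fps_X (ev r m).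
Proof.
elim: m => [|m IH].
  by rewrite /Pm /qpoch /= gV_0 !fps_mul1.
rewrite /Pm !qpochS mul1n add1n gV_S /=.
set A := qpoch 1 1 m; set B := qpoch 1 2 m.
set F1 := fps_sub fps_one (fps_X m.+1).
set F2 := fps_sub fps_one (fps_X (1 + 2 * m)).
set G := geo (2 * m + 1) _.
rewrite rearr geo_inv // /G /F2 addnC geo_inv ?addn1 //.
rewrite fps_mulCA -/(Pm m) IH fps_XX addnC //.
Qed.

Lemma Kv_Z r m : -1 <= r -> (Kv r m)%:Z = (2 * m + 1)%N%:Z + r * m%:Z.
Proof.
move=> hr; rewrite /Kv gez0_abs //.
have : 0 <= (r + 1) * m%:Z by apply: mulr_ge0; lia.
lia.
Qed.

Lemma expo_ev r m : -1 <= r -> expo r m = (ev r m)%:Z.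
Proof.
move=> hr; elim: m => [|m IH]; first by rewrite /expo /= mulr0.
rewrite /= PoszD -IH Kv_Z // /expo binS bin1.
have -> : (m.+1 ^ 2 = m ^ 2 + 2 * m + 1)%N by rewrite -addn1 sqrnD; lia.
rewrite !PoszD !PoszM; ring.
Qed.

Lemma gV_rhs r m : -1 <= r -> gV r m = rhs_term r m.
Proof.
move=> hr; apply: (@fps_cancel (Pm m)); first exact: Pm0.
rewrite key_gf /rhs_term fps_mulCA inv_mul ?Pm0 // fps_mulr1.
by rewrite expo_ev // absz_nat.
Qed.

Lemma tval_Z r a i : -1 <= r -> (0 < i)%N -> (tval r a i)%:Z = a%:Z + i%:Z + r.
Proof. by move=> hr i0; rewrite /tval gez0_abs //; lia. Qed.

Lemma lexle_shift t p q : lexle (shiftp t p) (shiftp t q) = lexle p q.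
Proof. by rewrite /lexle /= ltn_add2r eqn_add2r. Qed.

Lemma wdiff_shift t p q : wdiff (shiftp t p) (shiftp t q) = wdiff p q.
Proof. rewrite /wdiff /= !PoszD; ring. Qed.

Lemma sorted_lex_shift t s : sorted lexle (map (shiftp t) s) = sorted lexle s.
Proof.
rewrite sorted_map; case: s => //= x s; apply: eq_path => p q.
exact: lexle_shift.
Qed.

Lemma sorted_R_shift (r : int) t s :
  sorted (fun a b => r <= wdiff b a) (map (shiftp t) s) =
  sorted (fun a b => r <= wdiff b a) s.
Proof.
rewrite sorted_map; case: s => //= x s; apply: eq_path => p q.
by rewrite /relpre /= wdiff_shift.
Qed.

Lemma sumn_shift t s :
  sumn (map fst (map (shiftp t) s)) = (sumn (map fst s) + size s * t)%N.
Proof. elim: s => //= x s ->; rewrite mulSn; lia. Qed.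

Lemma weight_eq r m e c : -1 <= r ->
  (m.+1 * e + (2 * m + 1) * c + Kv r m = c.+1 + e + m * tval r (c.+1 + e) c.+1)%N.
Proof.
move=> hr; apply/eqP; rewrite -(eqr_nat int) !natz.
rewrite !PoszD !PoszM Kv_Z // tval_Z // !PoszD; apply/eqP; ring.
Qed.

Lemma part_ok_shift t p : part_ok p -> part_ok (shiftp t p).
Proof. by rewrite /part_ok /= => /andP[h1 h2]; apply/andP; split => //; lia. Qed.

Lemma valid_build r e c s : -1 <= r -> valid_part r s -> valid_part r (build r e c s).
Proof.
move=> hr /andP[/andP[ok so1] so2]; rewrite /valid_part /build.
set t := tval r (c.+1 + e) c.+1.
have tZ : t%:Z = (c.+1 + e)%N%:Z + (c.+1)%:Z + r by rewrite tval_Z.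
apply/andP; split; first (apply/andP; split).
- rewrite /= all_map; apply/andP; split; first by rewrite /part_ok /=; lia.
  by apply/allP => p ps; apply: part_ok_shift; apply: (allP ok).
- case: s ok so1 {so2} => // y s /= /andP[oky _] so1.
  apply/andP; split.
    rewrite /lexle /=; apply/orP; left; move: oky; rewrite /part_ok => /andP[h1 h2]; lia.
  by have := sorted_lex_shift t (y :: s); rewrite /= so1.
- case: s ok so2 {so1} => // y s /= /andP[oky _] so2.
  apply/andP; split.
    rewrite /wdiff /=; move: oky; rewrite /part_ok => /andP[h1 h2]; rewrite PoszD; lia.
  by have := sorted_R_shift r t (y :: s); rewrite /= so2.
Qed.

Lemma head_bound (r : int) x s : -1 <= r ->
  path (fun a b => r <= wdiff b a) x s -> all part_ok s ->
  forall y, y \in s -> x.1%:Z + x.2%:Z + r + y.2%:Z <= y.1%:Z.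
Proof.
move=> hr; elim: s x => // z s IH x /= /andP[Rxz Pzs] /andP[okz oks] y.
rewrite inE => /orP[/eqP -> | ys].
  by move: Rxz; rewrite /wdiff; lia.
have := IH z Pzs oks y ys; move: okz Rxz; rewrite /part_ok /wdiff => /andP[h1 h2].
move: (z.1) (z.2) (x.1) (x.2) (y.1) (y.2) h1 h2 => a b c d f g h1 h2 H1 H2; lia.
Qed.

Lemma memV_S r m N s : (s \in V r m.+1 N) <->
  exists e c s', [/\ s = build r e c s',
     s' \in V r m (N - m.+1 * e - (2 * m + 1) * c - Kv r m)%N &
     (m.+1 * e + (2 * m + 1) * c + Kv r m <= N)%N].
Proof.
split.
- rewrite VS => /flattenP [l /mapP [e]]; rewrite mem_filter mem_iota => /andP[g1 _] ->.
  move=> /flattenP [l' /mapP [c]]; rewrite mem_filter mem_iota => /andP[g2 _] ->.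
  case: ifP => // g3 /mapP [s' Hs' ->]; exists e, c, s'; split => //; lia.
- case=> e [c [s' [-> Hs' g]]].
  have he := leq_pmull e (ltn0Sn m).
  have hc : (c <= (2 * m + 1) * c)%N by apply: leq_pmull; lia.
  have me : e \in [seq e <- iota 0 N.+1 | (m.+1 * e <= N)%N].
    by rewrite mem_filter mem_iota; apply/andP; split; lia.
  have mc : c \in [seq c <- iota 0 (N - m.+1 * e).+1 | ((2 * m + 1) * c <= N - m.+1 * e)%N].
    by rewrite mem_filter mem_iota; apply/andP; split; lia.
  rewrite VS; apply/flattenP; eexists; first exact: (map_f _ me).
  apply/flattenP; eexists; first exact: (map_f _ mc).
  by rewrite ifT; [apply: map_f | lia].
Qed.

Lemma V_sound r m N s : -1 <= r -> s \in V r m N ->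
  [/\ valid_part r s, pweight s = N & size s = m].
Proof.
move=> hr; elim: m N s => [|m IH] N s.
  by rewrite /=; case: eqP => // -> ; rewrite inE => /eqP ->.
move/memV_S => [e [c [s' [-> Hs' g]]]].
have [v w sz] := IH _ _ Hs'.
split; first exact: valid_build.
  rewrite /pweight /build /= sumn_shift -/(pweight s') w sz.
  have := weight_eq r m e c hr; lia.
by rewrite /= size_map sz.
Qed.

Lemma V_complete r s : -1 <= r -> valid_part r s -> s \in V r (size s) (pweight s).
Proof.
move=> hr; move: {2}(size s) (erefl (size s)) => m.
elim: m s => [|m IH] s.
  by case: s => // _ _; rewrite /= inE.
case: s => // [[a i] s0] [sz] /andP[/andP[okall so1] so2].
move: okall => /andP[oki oks]; move: oki; rewrite /part_ok /= => /andP[i0 ia].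
set t := tval r a i.
have tZ : t%:Z = a%:Z + i%:Z + r by rewrite tval_Z.
have hb := @head_bound r (a, i) s0 hr so2 oks.
set s' := map (unshiftp t) s0.
have Hs0 : map (shiftp t) s' = s0.
  rewrite -map_comp; apply: map_id_in => y ys.
  have := hb y ys; rewrite /= /shiftp /unshiftp /=.
  case: y ys => y1 y2 ys /= H; congr pair.
  move: tZ H; move: (t) => tt; lia.
have vs' : valid_part r s'.
  apply/andP; split; first (apply/andP; split).
  - rewrite /s' all_map; apply/allP => y ys; have := hb y ys.
    have := allP oks y ys; rewrite /part_ok /=.
    case: y ys => y1 y2 ys /= /andP[h1 h2] H; apply/andP; split => //.
    move: tZ H; move: (t) => tt; lia.
  - by rewrite -(sorted_lex_shift t) Hs0; apply: path_sorted so1.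
  - by rewrite -(sorted_R_shift r t) Hs0; apply: path_sorted so2.
have sz' : size s' = m by rewrite size_map.
have Hin := IH s' sz' vs'; rewrite sz' in Hin.
rewrite [X in V r X]/= sz.
apply/memV_S; exists (a - i)%N, i.-1, s'.
have we := weight_eq r m (a - i) i.-1 hr.
rewrite prednK // subnKC // -/t in we.
have pw : pweight ((a, i) :: s0) = (a + pweight s' + m * t)%N.
  by rewrite -Hs0 /pweight /= sumn_shift sz'; lia.
move: we pw; set X := (m.+1 * (a - i))%N; set Y := ((2 * m + 1) * i.-1)%N; set Z := (m * t)%N => we pw.
split.
- by rewrite /build prednK // subnKC // -/t Hs0.
- by rewrite pw; have -> : (a + pweight s' + Z - X - Y - Kv r m
     = pweight s')%N by lia.
- by rewrite pw; lia.
Qed.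

Lemma uniq_flatten_tag (T U : eqType) (xs : seq U) (F : U -> seq T) (g : T -> U) :
  uniq xs -> (forall x, x \in xs -> uniq (F x)) ->
  (forall x y, x \in xs -> y \in F x -> g y = x) -> uniq (flatten (map F xs)).
Proof.
elim: xs => //= x xs IH /andP[nx uxs] uF gF.
rewrite cat_uniq uF ?mem_head //= IH //; first last.
- by move=> z y zs; apply: gF; rewrite inE zs orbT.
- by move=> z zs; apply: uF; rewrite inE zs orbT.
rewrite andbT; apply/hasPn => y /flattenP [l /mapP [z zs ->]] yz.
apply/negP => yx.
have e1 := gF z y ltac:(by rewrite inE zs orbT) yz.
have e2 := gF x y (mem_head _ _) yx.
by move: nx; rewrite -e2 e1 zs.
Qed.

Lemma shift_inj t : injective (shiftp t).
Proof. by case=> a b [c d] [] /addIn -> ->. Qed.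

Lemma V_uniq r m N : uniq (V r m N).
Proof.
elim: m N => [|m IH] N; first by rewrite /=; case: (N == 0%N).
rewrite VS.
apply: (@uniq_flatten_tag _ _ _ _ (fun y => ((head (0, 0) y).1 - (head (0, 0) y).2)%N)).
- by rewrite filter_uniq // iota_uniq.
- move=> e _.
  apply: (@uniq_flatten_tag _ _ _ _ (fun y => ((head (0, 0) y).2).-1)).
  + by rewrite filter_uniq // iota_uniq.
  + move=> c _; case: ifP => // _; rewrite map_inj_uniq //.
    by move=> s1 s2 [] /(inj_map (@shift_inj _)).
  + move=> c y _; case: ifP => // _ /mapP [s _ ->] //.
- move=> e y _ /flattenP [l /mapP [c _ ->]].
  case: ifP => // _ /mapP [s _ ->] /=.
  by rewrite addKn.
Qed.

Lemma size_le_weight s : all part_ok s -> (size s <= pweight s)%N.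
Proof.
elim: s => //= x s IH /andP[okx oks].
have := IH oks; move: okx; rewrite /part_ok /pweight /= => /andP[h1 h2]; lia.
Qed.

Lemma V_empty r m N : -1 <= r -> (N < m)%N -> V r m N = [::].
Proof.
move=> hr Nm; case E: (V r m N) => [|y l] //.
have : y \in V r m N by rewrite E mem_head.
move/(@V_sound r _ _ _ hr) => [/andP[/andP[ok _] _] w sz].
have := @size_le_weight y ok; rewrite w sz; lia.
Qed.

Lemma size_flat2 (T : Type) (F : nat -> seq T) (xs : seq nat) :
  (size (flatten [seq F x | x <- xs]))%:Z = \sum_(x <- xs) (size (F x))%:Z.
Proof.
elim: xs => [|x xs IH]; first by rewrite big_nil.
by rewrite big_cons /= size_cat PoszD IH.
Qed.

Theorem corollary25 (r : int) : -1 <= r ->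
  forall N : nat,
  exists L : seq (seq (nat * nat)),
    [/\ uniq L,
        (forall s, (s \in L) = valid_part r s && (pweight s == N)) &
        exists M : nat, forall M' : nat, (M <= M')%N ->
          (size L)%:Z = \sum_(m < M') rhs_term r m N].
Proof.
move=> hr N; exists (flatten [seq V r m N | m <- iota 0 N.+1]); split.
- apply: (@uniq_flatten_tag _ _ _ _ size); first exact: iota_uniq.
    by move=> m _; apply: V_uniq.
  by move=> m y _ /(@V_sound r _ _ _ hr) [].
- move=> s; apply/idP/idP.
    move/flattenP => [l /mapP [m _ ->]] /(@V_sound r _ _ _ hr) [v w _].
    by rewrite v w eqxx.
  move=> /andP[v /eqP w]; apply/flattenP; exists (V r (size s) N).
    apply: (map_f (fun m => V r m N)); rewrite mem_iota add0n ltnS -w; apply: (@size_le_weight s).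
    by move: v => /andP[/andP[]].
  by rewrite -w; apply: V_complete.
- exists N.+1 => M' hM.
  rewrite size_flat2 -(big_mkord xpredT (fun m => rhs_term r m N)).
  rewrite (@big_cat_nat _ _ _ N.+1 0 M') //=.
  rewrite [X in _ + X]big_nat_cond [X in _ + X]big1 ?addr0; last first.
    move=> i /andP[/andP[Hi _] _]; rewrite -gV_rhs // /gV V_empty //.
  rewrite /index_iota subn0; apply: eq_bigr => m _.
  by rewrite -gV_rhs.
Qed.
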